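(* Let $X$ be a complex linear space and $A\colon X\to\mathbb{C}$ a nonzero additive functional, and put $\phi(x,y)=-A(x)A(y)$ for $x,y\in X$. Then a function $f\colon X\to\mathbb{C}$ satisfies $f(x+y)=f(x)f(y)-\phi(x,y)$ for all $x,y\in X$ if and only if $f(x)=\gamma A(x)+1$ for all $x\in X$ with $\gamma\in\{i,-i\}$.
   Context: A functional $A\colon X\to\mathbb{C}$ is additive if $A(x+y)=A(x)+A(y)$ for all $x,y\in X$ (it need not be $\mathbb{C}$-linear). *)

(* Defs.v *)
From HB Require Import structures.
From mathcomp Require Import all_boot all_order all_algebra.
From mathcomp Require Import complex.
From mathcomp Require Import reals.
Set Implicit Arguments. Unset Strict Implicit. Unset Printing Implicit Defensive.
Import Order.TTheory GRing.Theory Num.Theory.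
Local Open Scope ring_scope.

Definition additive_fun (V : zmodType) (K : zmodType) (A : V -> K) : Prop :=
  forall x y : V, A (x + y) = A x + A y.

(* Main.v *)
Require Import Defs.
From HB Require Import structures.
From mathcomp Require Import all_boot all_order all_algebra.
From mathcomp Require Import complex.
From mathcomp Require Import reals.
From mathcomp Require Import ring.
Import Order.TTheory GRing.Theory Num.Theory.
Local Open Scope ring_scope.
Local Open Scope complex_scope.

Theorem mainTheorem9 (R : realType) (X : lmodType R[i]) (A : X -> R[i])
  (hA : additive_fun A) (hA0 : exists x : X, A x != 0) (f : X -> R[i]) :
  (forall x y : X, f (x + y) = f x * f y - (- (A x * A y))) <->
  (exists gamma : R[i], (gamma = Complex 0 1 \/ gamma = - Complex 0 1) /\
     forall x : X, f x = gamma * A x + 1).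
Proof.
have i2 : Complex 0 1 * Complex 0 1 = -1 :> R[i] by rewrite -expr2 sqr_i.
have A0 : A 0 = 0.
  have e := hA 0 0; rewrite addr0 in e.
  by apply: (addrI (A 0)); rewrite addr0 -e.
case: hA0 => x0 Ax0.
split => [H|[g [hg hf]] x y].
- have H' : forall x y, f (x + y) = f x * f y + A x * A y.
    by move=> x y; rewrite H opprK.
  have f0 : f 0 = 1.
    have e := H' 0 0; rewrite addr0 A0 mulr0 addr0 in e.
    have [z|nz] := eqVneq (f 0) 0; last first.
      by apply: (mulfI nz); rewrite -e mulr1.
    have e2 := H' x0 0; rewrite addr0 z mulr0 A0 mulr0 addr0 in e2.
    have e3 := H' x0 x0; rewrite -[f x0 * _]/(f x0 * f x0) in e3.
    have e4 := H' (x0 + x0) 0; rewrite addr0 z mulr0 A0 mulr0 addr0 in e4.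
    move: e3; rewrite e4 e2 mulr0 add0r => /esym/eqP.
    by rewrite mulf_eq0 orbb (negbTE Ax0).
  have key : forall x z, A x * (f z - 1) = A z * (f x - 1).
    move=> x z.
    have e := H' (x + x0) z.
    rewrite (H' x x0) -addrA (H' x (x0 + z)) (addrC x0 z) (H' z x0) !hA in e.
    have : A x0 * (A x * (f z - 1) - A z * (f x - 1)) = 0.
      transitivity ((f x * f x0 + A x * A x0) * f z + (A x + A x0) * A z
         - (f x * (f z * f x0 + A z * A x0) + A x * (A z + A x0))); first by ring.
      by rewrite e subrr.
    move/eqP; rewrite mulf_eq0 (negbTE Ax0) /= subr_eq0 => /eqP //.
  pose g := (f x0 - 1) / A x0.
  have hf : forall z, f z = g * A z + 1.
    move=> z; have := key x0 z; rewrite /g => e.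
    apply/eqP; rewrite -subr_eq; apply/eqP.
    apply: (mulfI Ax0); rewrite e; field; exact: Ax0.
  have g2 : g * g = -1.
    have e := H' x0 x0; rewrite !hf hA in e.
    have : (A x0 * A x0) * (g * g + 1) = 0.
      transitivity ((g * A x0 + 1) * (g * A x0 + 1) + A x0 * A x0 - (g * (A x0 + A x0) + 1)); first by ring.
      by rewrite -e subrr.
    move/eqP; rewrite mulf_eq0 mulf_eq0 orbb (negbTE Ax0) /= addr_eq0 => /eqP //.
  exists g; split => //.
  have : (g - Complex 0 1) * (g + Complex 0 1) = 0.
    have -> : (g - Complex 0 1) * (g + Complex 0 1) = g * g - Complex 0 1 * Complex 0 1 by ring.
    by rewrite g2 i2 subrr.
  move/eqP; rewrite mulf_eq0 subr_eq0 addr_eq0 => /orP[] /eqP; by [left|right].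
- have g2 : g * g = -1 by case: hg => ->; rewrite ?mulrNN i2.
  rewrite !hf hA opprK.
  rewrite mulrDl !mulrDr !mulr1 mul1r mulrACA g2 mulN1r.
  by rewrite [RHS]addrC !addrA addrN add0r.
Qed.
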